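(* Fix $p\in(0,1)$, $\lambda\in[0,1]$, an integer $B>1$, $\omega>0$, $C_r\ge 0$, and let $V$ be the value function (as described in the context). Then: (i) for every $q\in\{0,1,\dots,B\}$ and all integers $1\le\Delta_1\le\Delta_2$, $V(\Delta_2,q)-V(\Delta_1,q)\ge \Delta_2-\Delta_1$; (ii) for every $q\in\{0,1,\dots,B-1\}$ and every $\Delta\in\mathbb Z^+$, $V(\Delta+1,q+1)-V(\Delta,q+1)\ge p\,[V(\Delta+1,q)-V(\Delta,q)]$.
   Context: System model. Time is slotted. State space $\mathcal S=\mathbb Z^+\times\{0,1,\dots,B\}$; a state $\mathbf x=(\Delta,q)$ consists of the Age of Information $\Delta\in\mathbb Z^+=\{1,2,\dots\}$ and the battery level $q$. Action set $\mathcal A=\{0,1\}$ ($a=1$: generate and transmit an update; $a=0$: idle). Let $u(x)=1$ if $x>0$ and $u(x)=0$ otherwise. Transitions: given state $(\Delta,q)$ and action $a$, draw independently $b\sim\mathrm{Bernoulli}(\lambda)$ (harvested energy arrival) and, if $a=1$, a success indicator $s\sim\mathrm{Bernoulli}(1-p)$ (the update is erased with probability $p$); if $a=0$ set $s=0$. The next state is $(\Delta',q')$ with $\Delta'=1$ if $s=1$ and $\Delta'=\Delta+1$ otherwise, and $q'=\min\{q+b-a\,u(q),\,B\}$. One-step cost: $C(\mathbf x,a)=\Delta+\omega C_r\,a\,(1-u(q))$ (transmitting with empty battery uses paid backup energy at cost $C_r$, weighted by $\omega$). Value iteration: $V_0(\mathbf x)=0$ for all $\mathbf x$; for $k\ge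 0$, $Q_k(\mathbf x,a)=C(\mathbf x,a)+\sum_{\mathbf x'\in\mathcal S}\Pr(\mathbf x'\mid\mathbf x,a)V_k(\mathbf x')$ and $V_{k+1}(\mathbf x)=\min_{a\in\mathcal A}Q_k(\mathbf x,a)$. Value function: $V:\mathcal S\to\mathbb R$ together with a constant $g\in\mathbb R$ satisfies the average-cost Bellman equation $g+V(\mathbf x)=\min_{a\in\mathcal A}\{C(\mathbf x,a)+\sum_{\mathbf x'}\Pr(\mathbf x'\mid\mathbf x,a)V(\mathbf x')\}$ for all $\mathbf x\in\mathcal S$, and $V$ is obtained from value iteration in the sense that $V(\mathbf x)=\lim_{k\to\infty}(V_k(\mathbf x)-c_k)$ pointwise for some real constants $c_k$. Write $Q(\mathbf x,a)=C(\mathbf x,a)+\sum_{\mathbf x'}\Pr(\mathbf x'\mid\mathbf x,a)V(\mathbf x')$. *)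

(* Defs.v *)
From Stdlib Require Import Reals Lra Lia Arith.
Open Scope R_scope.

(* Actions, energy arrivals and success indicators are encoded as bools;
   nat_of_bool true = 1, false = 0. *)
Definition nb (x : bool) : nat := if x then 1%nat else 0%nat.

Definition u (q : nat) : nat := if Nat.eqb q 0 then 0%nat else 1%nat.

Definition next_q (B q : nat) (a b : bool) : nat :=
  Nat.min (q + nb b - nb a * u q)%nat B.

Definition next_D (D : nat) (s : bool) : nat := if s then 1%nat else S D.

Definition cost (omega Cr : R) (D q : nat) (a : bool) : R :=
  INR D + omega * Cr * INR (nb a) * (1 - INR (u q)).

Definition prob_b (lam : R) (b : bool) : R := if b then lam else 1 - lam.

Definition prob_s (p : R) (a s : bool) : R :=
  if a then (if s then 1 - p else p) else (if s then 0 else 1).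

(* sum_{x'} Pr(x' | x, a) W(x'), written out over the independent
   outcomes (b, s) that determine x' *)
Definition EV (p lam : R) (B : nat) (W : nat -> nat -> R) (D q : nat) (a : bool) : R :=
  prob_b lam true * (prob_s p a true * W (next_D D true) (next_q B q a true)
                   + prob_s p a false * W (next_D D false) (next_q B q a true))
  + prob_b lam false * (prob_s p a true * W (next_D D true) (next_q B q a false)
                   + prob_s p a false * W (next_D D false) (next_q B q a false)).

Definition Qf (p lam : R) (B : nat) (omega Cr : R) (W : nat -> nat -> R)
  (D q : nat) (a : bool) : R :=
  cost omega Cr D q a + EV p lam B W D q a.

Fixpoint VI (p lam : R) (B : nat) (omega Cr : R) (k : nat) : nat -> nat -> R :=
  match k with
  | O => fun _ _ => 0
  | S k' => fun D q => Rmin (Qf p lam B omega Cr (VI p lam B omega Cr k') D q false)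
                            (Qf p lam B omega Cr (VI p lam B omega Cr k') D q true)
  end.

Definition in_S (B D q : nat) : Prop := (1 <= D)%nat /\ (q <= B)%nat.

(* V is "the value function": it solves the average-cost Bellman equation
   on S for some g, and is a pointwise limit of V_k - c_k on S. *)
Definition is_value_function (p lam : R) (B : nat) (omega Cr : R)
  (V : nat -> nat -> R) : Prop :=
  (exists g : R, forall D q, in_S B D q ->
      g + V D q = Rmin (Qf p lam B omega Cr V D q false) (Qf p lam B omega Cr V D q true))
  /\ (exists c : nat -> R, forall D q, in_S B D q ->
      Un_cv (fun k => VI p lam B omega Cr k D q - c k) (V D q)).

(* Main.v *)
Require Import Defs.
From Stdlib Require Import Reals Lra Lia Arith.
Open Scope R_scope.

Lemma cv_nonneg (u : nat -> R) (l : R) :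
  Un_cv u l -> (forall n, u n >= 0) -> l >= 0.
Proof.
  intros H Hp. destruct (Rle_lt_dec 0 l) as [h|h]; [lra|].
  destruct (H (- l / 2)) as [N HN]; [lra|].
  specialize (HN N (Nat.le_refl N)). specialize (Hp N).
  unfold R_dist in HN. apply Rabs_def2 in HN. lra.
Qed.

Lemma cv_const (c : R) : Un_cv (fun _ => c) c.
Proof.
  intros eps He. exists 0%nat. intros. unfold R_dist.
  rewrite Rminus_diag, Rabs_R0. lra.
Qed.

Lemma rmin_diff_lo a1 b1 a2 b2 : Rmin a2 b2 - Rmin a1 b1 >= Rmin (a2 - a1) (b2 - b1).
Proof. unfold Rmin; repeat destruct Rle_dec; lra. Qed.

Lemma rmin_diff_hi a1 b1 a2 b2 : Rmin a2 b2 - Rmin a1 b1 <= Rmax (a2 - a1) (b2 - b1).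
Proof. unfold Rmin, Rmax; repeat destruct Rle_dec; lra. Qed.

Lemma dQ0 p lam B omega Cr W D q : (q <= B)%nat ->
  Qf p lam B omega Cr W (S D) q false - Qf p lam B omega Cr W D q false =
  1 + lam * (W (S (S D)) (Nat.min (S q) B) - W (S D) (Nat.min (S q) B))
    + (1 - lam) * (W (S (S D)) q - W (S D) q).
Proof.
  intro Hq. unfold Qf, cost, EV, next_q, next_D, prob_b, prob_s, nb.
  replace (q + 1 - 0 * u q)%nat with (S q) by lia.
  replace (Nat.min (q + 0 - 0 * u q) B) with q by lia.
  rewrite S_INR. ring.
Qed.

Lemma dQ1 p lam B omega Cr W D q :
  Qf p lam B omega Cr W (S D) q true - Qf p lam B omega Cr W D q true =
  1 + p * (lam * (W (S (S D)) (next_q B q true true) - W (S D) (next_q B q true true))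
    + (1 - lam) * (W (S (S D)) (next_q B q true false) - W (S D) (next_q B q true false))).
Proof.
  unfold Qf, cost, EV, next_D, prob_b, prob_s. rewrite S_INR. ring.
Qed.

Lemma nq_le B q a b : (next_q B q a b <= B)%nat.
Proof. unfold next_q; lia. Qed.

Lemma combo1 p l em e0 e1 e2 : 0<p<1 -> 0<=l<=1 -> em>=0 -> e0>=0 -> e1>=0 -> e2>=0 ->
  e0 >= p*em -> e1 >= p*e0 -> e2 >= p*e1 ->
  Rmin (1 + l*e2 + (1-l)*e1) (1 + p*(l*e1 + (1-l)*e0)) >=
  p * Rmax (1 + l*e1 + (1-l)*e0) (1 + p*(l*e0 + (1-l)*em)).
Proof.
  intros.
  assert (p*e0 >= p*(p*em)) by (apply Rmult_ge_compat_l; lra).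
  assert (p*e1 >= p*(p*e0)) by (apply Rmult_ge_compat_l; lra).
  assert (p*e0 >= p*(p*e0)).
  { assert (0 <= (p*e0)*(1-p)) by (apply Rmult_le_pos; [apply Rmult_le_pos|]; lra). lra. }
  assert (e1 >= p * (p*em)) by lra. assert (e2 >= p*(p*e0)) by lra.
  assert (l*e2 >= l*(p*e1)) by (apply Rmult_ge_compat_l; lra).
  assert ((1-l)*e1 >= (1-l)*(p*e0)) by (apply Rmult_ge_compat_l; lra).
  assert (l*e2 >= l*(p*(p*e0))) by (apply Rmult_ge_compat_l; lra).
  assert ((1-l)*e1 >= (1-l)*(p*(p*em))) by (apply Rmult_ge_compat_l; lra).
  assert (l*e1 >= l*(p*e0)) by (apply Rmult_ge_compat_l; lra).
  assert ((1-l)*e0 >= (1-l)*(p*em)) by (apply Rmult_ge_compat_l; lra).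
  assert (X0 : 0 <= l*e1 + (1-l)*e0).
  { assert (0 <= l*e1) by (apply Rmult_le_pos; lra).
    assert (0 <= (1-l)*e0) by (apply Rmult_le_pos; lra). lra. }
  assert (X1 : 0 <= p*(l*e1 + (1-l)*e0)*(1-p)) by (apply Rmult_le_pos; [apply Rmult_le_pos|]; lra).
  assert (X2 : p*(l*e1 + (1-l)*e0) >= p*(p*(l*e0 + (1-l)*em))) by (apply Rmult_ge_compat_l; lra).
  assert (A1 : 1 + l*e2 + (1-l)*e1 >= p * (1 + l*e1 + (1-l)*e0)) by lra.
  assert (A2 : 1 + l*e2 + (1-l)*e1 >= p * (1 + p*(l*e0 + (1-l)*em))) by lra.
  assert (A3 : 1 + p*(l*e1 + (1-l)*e0) >= p * (1 + l*e1 + (1-l)*e0)) by lra.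
  assert (A4 : 1 + p*(l*e1 + (1-l)*e0) >= p * (1 + p*(l*e0 + (1-l)*em))) by lra.
  unfold Rmin, Rmax; repeat destruct Rle_dec; lra.
Qed.

Lemma combo0 p l e0 e1 e2 : 0<p<1 -> 0<=l<=1 -> e0>=0 -> e1>=0 -> e2>=0 ->
  e1 >= p*e0 -> e2 >= p*e1 ->
  Rmin (1 + l*e2 + (1-l)*e1) (1 + p*(l*e1 + (1-l)*e0)) >=
  p * Rmax (1 + l*e1 + (1-l)*e0) (1 + p*(l*e1 + (1-l)*e0)).
Proof.
  intros.
  assert (l*e2 >= l*(p*e1)) by (apply Rmult_ge_compat_l; lra).
  assert ((1-l)*e1 >= (1-l)*(p*e0)) by (apply Rmult_ge_compat_l; lra).
  assert (X0 : 0 <= l*e1 + (1-l)*e0).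
  { assert (0 <= l*e1) by (apply Rmult_le_pos; lra).
    assert (0 <= (1-l)*e0) by (apply Rmult_le_pos; lra). lra. }
  assert (X1 : 0 <= p*(l*e1 + (1-l)*e0)*(1-p)) by (apply Rmult_le_pos; [apply Rmult_le_pos|]; lra).
  assert (Y0 : 0 <= l*e2 + (1-l)*e1).
  { assert (0 <= l*e2) by (apply Rmult_le_pos; lra).
    assert (0 <= (1-l)*e1) by (apply Rmult_le_pos; lra). lra. }
  assert (X3 : 0 <= (l*e2 + (1-l)*e1)*(1-p)) by (apply Rmult_le_pos; lra).
  assert (X2 : p*(l*e2 + (1-l)*e1) >= p*(p*(l*e1 + (1-l)*e0))) by (apply Rmult_ge_compat_l; lra).
  assert (A1 : 1 + l*e2 + (1-l)*e1 >= p * (1 + l*e1 + (1-l)*e0)) by lra.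
  assert (A2 : 1 + l*e2 + (1-l)*e1 >= p * (1 + p*(l*e1 + (1-l)*e0))) by lra.
  assert (A3 : 1 + p*(l*e1 + (1-l)*e0) >= p * (1 + l*e1 + (1-l)*e0)) by lra.
  assert (A4 : 1 + p*(l*e1 + (1-l)*e0) >= p * (1 + p*(l*e1 + (1-l)*e0))) by lra.
  unfold Rmin, Rmax; repeat destruct Rle_dec; lra.
Qed.

Definition Nonneg (B : nat) (W : nat -> nat -> R) :=
  forall D q, (q <= B)%nat -> W (S D) q - W D q >= 0.
Definition Ratio (p : R) (B : nat) (W : nat -> nat -> R) :=
  forall D q, (q < B)%nat -> W (S D) (S q) - W D (S q) >= p * (W (S D) q - W D q).

Lemma step p lam B omega Cr W : 0 < p < 1 -> 0 <= lam <= 1 ->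
  Nonneg B W -> Ratio p B W ->
  let W' := fun D q => Rmin (Qf p lam B omega Cr W D q false) (Qf p lam B omega Cr W D q true) in
  Nonneg B W' /\ Ratio p B W'.
Proof.
  intros Hp Hl HN HR W'. split.
  - intros D q Hq. unfold W'.
    eapply Rge_trans; [apply rmin_diff_lo|].
    rewrite dQ0 by exact Hq. rewrite dQ1.
    pose proof (HN (S D) _ (Nat.le_min_r (S q) B)).
    pose proof (HN (S D) q Hq).
    pose proof (HN (S D) _ (nq_le B q true true)).
    pose proof (HN (S D) _ (nq_le B q true false)).
    match goal with |- Rmin (1 + lam * ?a + (1 - lam) * ?b) (1 + p * (lam * ?c + (1 - lam) * ?d)) >= 0 =>
      assert (0 <= lam * a) by (apply Rmult_le_pos; lra);
      assert (0 <= (1-lam) * b) by (apply Rmult_le_pos; lra);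
      assert (0 <= p * (lam * c + (1 - lam) * d)) by
        (apply Rmult_le_pos; [lra|]; apply Rplus_le_le_0_compat; apply Rmult_le_pos; lra) end.
    unfold Rmin; destruct Rle_dec; lra.
  - intros D q Hq. unfold W'.
    eapply Rge_trans; [apply rmin_diff_lo|].
    eapply Rge_trans with (r2 := p * Rmax _ _);
      [| apply Rle_ge, Rmult_le_compat_l; [lra| apply rmin_diff_hi]].
    rewrite !dQ0 by lia. rewrite !dQ1.
    set (e := fun x => W (S (S D)) x - W (S D) x).
    change (W (S (S D)) ?x - W (S D) ?x) with (e x).
    assert (Hn : forall x, (x <= B)%nat -> e x >= 0) by (intros; apply HN; auto).
    assert (Hr : forall x, (x < B)%nat -> e (S x) >= p * e x) by (intros; apply HR; auto).
    replace (Nat.min (S q) B) with (S q) by lia.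
    assert (E1 : next_q B (S q) true true = S q) by (unfold next_q, u, nb; cbn [Nat.eqb]; lia).
    assert (E2 : next_q B (S q) true false = q) by (unfold next_q, u, nb; cbn [Nat.eqb]; lia).
    rewrite E1, E2.
    assert (Hm : e (Nat.min (S (S q)) B) >= p * e (S q)).
    { destruct (Nat.le_gt_cases (S (S q)) B).
      - replace (Nat.min (S (S q)) B) with (S (S q)) by lia. apply Hr; lia.
      - replace (Nat.min (S (S q)) B) with (S q) by lia.
        pose proof (Hn (S q) ltac:(lia)). nra. }
    pose proof (Hn (Nat.min (S (S q)) B) ltac:(lia)).
    destruct q as [|q].
    + assert (F1 : next_q B 0 true true = 1%nat) by (unfold next_q, u, nb; cbn [Nat.eqb]; lia).
      assert (F2 : next_q B 0 true false = 0%nat) by (unfold next_q, u, nb; cbn [Nat.eqb]; lia).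
      rewrite F1, F2.
      apply combo0; auto; try apply Hn; try apply Hr; lia.
    + assert (F1 : next_q B (S q) true true = S q) by (unfold next_q, u, nb; cbn [Nat.eqb]; lia).
      assert (F2 : next_q B (S q) true false = q) by (unfold next_q, u, nb; cbn [Nat.eqb]; lia).
      rewrite F1, F2.
      apply combo1; auto; try apply Hn; try apply Hr; lia.
Qed.

Lemma VI_props p lam B omega Cr k : 0 < p < 1 -> 0 <= lam <= 1 ->
  Nonneg B (VI p lam B omega Cr k) /\ Ratio p B (VI p lam B omega Cr k).
Proof.
  intros Hp Hl. induction k as [|k IH].
  - split; intros D q Hq; simpl; lra.
  - destruct IH as [H1 H2]. exact (step p lam B omega Cr _ Hp Hl H1 H2).
Qed.

Theorem lemma2 (p lam : R) (B : nat) (omega Cr : R) (V : nat -> nat -> R) :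
  0 < p < 1 -> 0 <= lam <= 1 -> (1 < B)%nat -> 0 < omega -> 0 <= Cr ->
  is_value_function p lam B omega Cr V ->
  (forall (q D1 D2 : nat), (q <= B)%nat -> (1 <= D1)%nat -> (D1 <= D2)%nat ->
      V D2 q - V D1 q >= INR D2 - INR D1)
  /\ (forall (q D : nat), (q < B)%nat -> (1 <= D)%nat ->
      V (S D) (S q) - V D (S q) >= p * (V (S D) q - V D q)).
Proof.
  intros Hp Hl HB Hw HC [[g Hg] [c Hc]].
  assert (Hdiff : forall D1 D2 q, in_S B D1 q -> in_S B D2 q ->
     Un_cv (fun k => VI p lam B omega Cr k D2 q - VI p lam B omega Cr k D1 q) (V D2 q - V D1 q)).
  { intros D1 D2 q H1 H2. eapply Un_cv_ext; [|apply (CV_minus _ _ _ _ (Hc _ _ H2) (Hc _ _ H1))].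
    intro k; simpl; ring. }
  assert (Hmono1 : forall D q, (1 <= D)%nat -> (q <= B)%nat -> V (S D) q - V D q >= 0).
  { intros D q HD Hq. eapply cv_nonneg; [apply Hdiff; split; lia|].
    intro k. apply (proj1 (VI_props p lam B omega Cr k Hp Hl)); auto. }
  assert (Hmono : forall n D q, (1 <= D)%nat -> (q <= B)%nat -> V (n + D)%nat q - V D q >= 0).
  { induction n; intros D q HD Hq; simpl; [lra|].
    pose proof (IHn D q HD Hq). pose proof (Hmono1 (n + D)%nat q ltac:(lia) Hq). lra. }
  split.
  - intros q D1 D2 Hq H1 H12.
    pose proof (Hg D2 q ltac:(split; lia)) as G2.
    pose proof (Hg D1 q ltac:(split; lia)) as G1.
    assert (K : forall a, Qf p lam B omega Cr V D2 q a - Qf p lam B omega Cr V D1 q a >= INR D2 - INR D1).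
    { intro a. unfold Qf, cost, EV, next_D.
      pose proof (Hmono (D2 - D1)%nat (S D1) (next_q B q a true) ltac:(lia) (nq_le _ _ _ _)).
      pose proof (Hmono (D2 - D1)%nat (S D1) (next_q B q a false) ltac:(lia) (nq_le _ _ _ _)).
      replace (D2 - D1 + S D1)%nat with (S D2) in * by lia.
      assert (0 <= prob_s p a false) by (unfold prob_s; destruct a; lra).
      set (x1 := V (S D2) (next_q B q a true) - V (S D1) (next_q B q a true)) in *.
      set (x0 := V (S D2) (next_q B q a false) - V (S D1) (next_q B q a false)) in *.
      assert (0 <= lam * (prob_s p a false * x1)) by
        (apply Rmult_le_pos; [lra|apply Rmult_le_pos; lra]).
      assert (0 <= (1 - lam) * (prob_s p a false * x0)) by
        (apply Rmult_le_pos; [lra|apply Rmult_le_pos; lra]).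
      unfold prob_b, x1, x0 in *. lra. }
    pose proof (rmin_diff_lo (Qf p lam B omega Cr V D1 q false) (Qf p lam B omega Cr V D1 q true)
      (Qf p lam B omega Cr V D2 q false) (Qf p lam B omega Cr V D2 q true)).
    pose proof (K false). pose proof (K true).
    revert H. unfold Rmin at 3; destruct Rle_dec; lra.
  - intros q D Hq HD.
    assert (L : Un_cv (fun k => (VI p lam B omega Cr k (S D) (S q) - VI p lam B omega Cr k D (S q))
          - (fun _ => p) k * (VI p lam B omega Cr k (S D) q - VI p lam B omega Cr k D q))
          ((V (S D) (S q) - V D (S q)) - p * (V (S D) q - V D q))).
    { apply CV_minus; [apply Hdiff; split; lia|].
      apply CV_mult; [apply cv_const| apply Hdiff; split; lia]. }
    apply cv_nonneg in L; [lra|].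
    intro k. pose proof (proj2 (VI_props p lam B omega Cr k Hp Hl) D q Hq). simpl; lra.
Qed.
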